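(* Let $q$ be a prime, $0\le r\le n$, $X_r=\mathrm{diag}(qI_r,I_{n-r})$ and $X_{0,r}=\mathrm{diag}(I_{n-r},q^{-1}I_r)$. Suppose $(M\ N)$ and $(X_{0,r}MX_r^{-1}\ \ X_{0,r}NX_r)$ are both integral coprime symmetric pairs, with $\det N\ne0$. Then $$\mathcal G_{X_{0,r}MX_r^{-1}}(X_{0,r}NX_r)=\mathcal G_M(N).$$
   Context: A pair $(M\ N)$ of integral $n\times n$ matrices is a coprime symmetric pair if $M\,{}^tN$ is symmetric and $(M\ N)$ has rank $n$ modulo every prime. For such a pair with $\det N\ne0$, $\mathcal G_M(N)=\sum_{U\in\mathbb Z^{1,n}/\mathbb Z^{1,n}N}\exp\big(2\pi i\,\mathrm{Tr}({}^tUUN^{-1}M)\big)$. *)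

(* Defs.v *)
From mathcomp Require Import all_boot all_order all_algebra.
From mathcomp Require Import Rstruct.
From mathcomp.real_closed Require Import complex.
From Stdlib Require Reals.

Set Implicit Arguments.
Unset Strict Implicit.
Unset Printing Implicit Defensive.

Import GRing.Theory Num.Theory.
Local Open Scope ring_scope.

Definition CC := (Rdefinitions.R)[i].

(* e(x) = exp(2 pi i x) for rational x. *)
Definition e (x : rat) : CC :=
  Complex (Rtrigo_def.cos (2 * Rtrigo1.PI * ratr x)%R)
          (Rtrigo_def.sin (2 * Rtrigo1.PI * ratr x)%R).

Definition mxQ m n (A : 'M[int]_(m, n)) : 'M[rat]_(m, n) := map_mx intr A.

Definition coprime_symmetric_pair n (M N : 'M[int]_n) : Prop :=
  (M *m N^T)^T = M *m N^T /\
  forall p : nat, prime p ->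
    \rank (map_mx (fun z : int => z%:~R : 'F_p) (row_mx M N)) = n.

(* U ~ V in Z^{1,n} / Z^{1,n} N  (for det N <> 0): (U - V) N^{-1} is integral,
   i.e. U - V = W N for some integral row vector W. *)
Definition rowN_equiv n (N : 'M[int]_n) (U V : 'rV[int]_n) : bool :=
  [forall j, (mxQ (U - V) *m invmx (mxQ N)) 0 j \is a Num.int].

(* The box {0,...,d-1}^n with d = |det N|; since d Z^n is contained in Z^n N,
   every class of Z^{1,n}/Z^{1,n}N meets the box, and the classes of the
   quotient correspond bijectively to the traces of those classes on the box. *)
Definition boxd n (N : 'M[int]_n) : nat := `|\det N|%N.

Definition box_embed n d (b : 'rV['I_d]_n) : 'rV[int]_n :=
  map_mx (fun i : 'I_d => (i : nat)%:Z) b.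

Definition quotient_classes n (N : 'M[int]_n) : {set {set 'rV['I_(boxd N)]_n}} :=
  [set [set b' | rowN_equiv N (box_embed b) (box_embed b')] | b : 'rV['I_(boxd N)]_n].

Definition gauss_term n (M N : 'M[int]_n) (U : 'rV[int]_n) : CC :=
  e (\tr ((mxQ U)^T *m mxQ U *m invmx (mxQ N) *m mxQ M)).

(* G_M(N) = sum over U in Z^{1,n}/Z^{1,n}N of e(Tr(tU U N^{-1} M)),
   summing over the classes, each evaluated at a representative. *)
Definition gauss_sum n (M N : 'M[int]_n) : CC :=
  \sum_(C in quotient_classes N)
     match [pick b in C] with
     | Some b => gauss_term M N (box_embed b)
     | None => 0
     end.

Definition Xr n (q r : nat) : 'M[rat]_n :=
  \matrix_(i, j) (if i == j then (if (i < r)%N then q%:R else 1) else 0).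

Definition X0r n (q r : nat) : 'M[rat]_n :=
  \matrix_(i, j) (if i == j then (if (n - r <= i)%N then q%:R^-1 else 1) else 0).

(* Main.v *)
Require Import Defs.
From mathcomp Require Import all_boot all_order all_algebra.
From mathcomp Require Import Rstruct.
From mathcomp.real_closed Require Import complex.
Import GRing.Theory Num.Theory.
Local Open Scope ring_scope.
Set Implicit Arguments.
Unset Strict Implicit.
Unset Printing Implicit Defensive.


Lemma cos_sin_nat (y : Rdefinitions.R) (k : nat) :
  Rtrigo_def.cos (y + 2 * Rtrigo1.PI * k%:R) = Rtrigo_def.cos y /\
  Rtrigo_def.sin (y + 2 * Rtrigo1.PI * k%:R) = Rtrigo_def.sin y.
Proof.
have h1 := Rtrigo1.cos_period y k; have h2 := Rtrigo1.sin_period y k.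
rewrite INRE RplusE !RmultE IZRposE INRE /= in h1 h2.
have -> : (y + 2 * Rtrigo1.PI * k%:R) = (y + 2 * k%:R * Rtrigo1.PI).
  by rewrite -mulrA (mulrC Rtrigo1.PI) mulrA.
by split.
Qed.

Lemma e_addz (x : rat) (z : int) : e (x + z%:~R) = e x.
Proof.
rewrite /e rmorphD /= ratr_int.
set y := 2 * Rtrigo1.PI * ratr x.
have -> : 2 * Rtrigo1.PI * (ratr x + z%:~R) = y + 2 * Rtrigo1.PI * z%:~R
  :> Rdefinitions.R by rewrite /y mulrDr.
case: z => [k|k].
  by have [-> ->] := cos_sin_nat y k.
rewrite NegzE mulrNz mulrN.
have [h1 h2] := cos_sin_nat (y - 2 * Rtrigo1.PI * (k.+1)%:~R) k.+1.
by rewrite -addrA addNr addr0 in h1 h2; rewrite -h1 -h2.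
Qed.


Lemma mxQM m n p (A : 'M[int]_(m, n)) (B : 'M[int]_(n, p)) :
  mxQ (A *m B) = mxQ A *m mxQ B.
Proof. exact: map_mxM. Qed.
Lemma mxQD m n (A B : 'M[int]_(m, n)) : mxQ (A + B) = mxQ A + mxQ B.
Proof. exact: map_mxD. Qed.
Lemma mxQB m n (A B : 'M[int]_(m, n)) : mxQ (A - B) = mxQ A - mxQ B.
Proof. exact: map_mxB. Qed.
Lemma mxQT m n (A : 'M[int]_(m, n)) : mxQ A^T = (mxQ A)^T.
Proof. by rewrite /mxQ map_trmx. Qed.
Lemma mxQZ m n (a : int) (A : 'M[int]_(m, n)) : mxQ (a *: A) = a%:~R *: mxQ A.
Proof. exact: map_mxZ. Qed.
Lemma mxQ_inj m n : injective (@mxQ m n).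
Proof.
move=> A B eq_AB; apply/matrixP=> i j.
by move/matrixP/(_ i j): eq_AB; rewrite !mxE; apply: intr_inj.
Qed.
Lemma mxQ_unit n (N : 'M[int]_n) : \det N != 0 -> mxQ N \in unitmx.
Proof. by move=> h; rewrite unitmxE /mxQ det_map_mx unitfE intr_eq0. Qed.

Lemma rowN_equivP n (N : 'M[int]_n) (U V : 'rV[int]_n) : \det N != 0 ->
  reflect (exists W : 'rV[int]_n, U - V = W *m N) (rowN_equiv N U V).
Proof.
move=> hN; have uN := mxQ_unit hN; apply: (iffP forallP) => [h|[W hW] j].
  exists (\row_j Num.floor ((mxQ (U - V) *m invmx (mxQ N)) 0 j)).
  apply: mxQ_inj; rewrite mxQM -[LHS](mulmxKV uN); congr (_ *m _).
  apply/matrixP => i j; rewrite ord1 {2}/mxQ [in RHS]mxE [in RHS]mxE floorK //; exact: h.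
rewrite hW mxQM mulmxK // /mxQ mxE; exact: intr_int.
Qed.


Definition zeq n (N : 'M[int]_n) (U V : 'rV[int]_n) : Prop :=
  exists W : 'rV[int]_n, U - V = W *m N.

Lemma zeq_refl n (N : 'M[int]_n) U : zeq N U U.
Proof. by exists 0; rewrite subrr mul0mx. Qed.
Lemma zeq_sym n (N : 'M[int]_n) U V : zeq N U V -> zeq N V U.
Proof. by case=> W h; exists (- W); rewrite mulNmx -h opprB. Qed.
Lemma zeq_trans n (N : 'M[int]_n) U V Y : zeq N U V -> zeq N V Y -> zeq N U Y.
Proof.
case=> W1 h1 [W2 h2]; exists (W1 + W2).
by rewrite mulmxDl -h1 -h2 addrA subrK.
Qed.

Lemma boxd_gt0 n (N : 'M[int]_n) : \det N != 0 -> (0 < boxd N)%N.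
Proof. by rewrite /boxd absz_gt0. Qed.

Definition box_rep n (N : 'M[int]_n) (hd : (0 < boxd N)%N) (U : 'rV[int]_n)
  : 'rV['I_(boxd N)]_n :=
  \row_j Ordinal (ltn_pmod `|((U ord0 j) %% (boxd N)%:Z)%Z| hd).

Lemma box_embed_rep n (N : 'M[int]_n) (hd : (0 < boxd N)%N) U j :
  box_embed (box_rep hd U) 0 j = ((U ord0 j) %% (boxd N)%:Z)%Z.
Proof.
rewrite /box_embed /box_rep !mxE /=.
have h0 : (0 < (boxd N)%:Z) by rewrite ltz_nat.
have hge := modz_ge0 (U 0 j) (lt0r_neq0 h0).
have hlt := ltz_pmod (U 0 j) h0.
rewrite modn_small; first by rewrite gez0_abs.
by rewrite -ltz_nat gez0_abs.
Qed.

Lemma zeq_box_rep n (N : 'M[int]_n) (hd : (0 < boxd N)%N) U :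
  zeq N U (box_embed (box_rep hd U)).
Proof.
set d := boxd N.
exists ((\row_j ((U ord0 j) %/ d%:Z)%Z) *m (sgz (\det N) *: \adj N)).
rewrite -mulmxA -scalemxAl mul_adj_mx scale_scalar_mx -abszEsg.
rewrite mul_mx_scalar; apply/matrixP => i j; rewrite ord1 !mxE.
move: (box_embed_rep hd U j); rewrite /box_embed !mxE => ->.
by rewrite {1}(divz_eq (U ord0 j) d%:Z) addrK mulrC.
Qed.

Lemma zeqP n (N : 'M[int]_n) (U V : 'rV[int]_n) : \det N != 0 ->
  reflect (zeq N U V) (rowN_equiv N U V).
Proof. exact: rowN_equivP. Qed.
Section Cls.
Variables (n : nat) (N : 'M[int]_n).
Hypothesis hN : \det N != 0.
Local Notation be := (@box_embed n (boxd N)).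
Definition cls (b : 'rV['I_(boxd N)]_n) := [set b' | rowN_equiv N (be b) (be b')].

Lemma cls_eq b1 b2 : (cls b1 = cls b2) <-> zeq N (be b1) (be b2).
Proof.
split=> [h|h].
  have : b2 \in cls b2 by rewrite inE; apply/zeqP=> //; exact: zeq_refl.
  by rewrite -h inE => /zeqP; apply.
apply/setP => b; rewrite !inE; apply/zeqP/zeqP => // h2.
  by apply: zeq_trans h2; apply: zeq_sym.
by apply: zeq_trans h2.
Qed.

Lemma pick_cls (g : 'rV[int]_n -> CC) b :
  (forall U V, zeq N U V -> g U = g V) ->
  match [pick b0 in cls b] with Some b0 => g (be b0) | None => 0 end = g (be b).
Proof.
move=> hg; case: pickP => [b0|h].
  by rewrite inE => /zeqP hb; apply: hg; apply: zeq_sym; apply: hb.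
by have := h b; rewrite inE; move/negbT/zeqP; case; [exact: hN | exact: zeq_refl].
Qed.

Lemma rep_cls b :
  zeq N (match [pick b0 in cls b] with Some b0 => be b0 | None => 0 end) (be b).
Proof.
case: pickP => [b0|h].
  by rewrite inE => /zeqP hb; apply: zeq_sym; apply: hb.
by have := h b; rewrite inE; move/negbT/zeqP; case; [exact: hN | exact: zeq_refl].
Qed.

Lemma qc_cls C : C \in quotient_classes N -> exists b, C = cls b.
Proof. by case/imsetP=> b _ ->; exists b. Qed.
Lemma cls_qc b : cls b \in quotient_classes N.
Proof. by apply/imsetP; exists b. Qed.
End Cls.

Lemma gauss_sum_transfer n (N N' : 'M[int]_n) (f g : 'rV[int]_n -> CC)
  (phi : 'rV[int]_n -> 'rV[int]_n) :
  \det N != 0 -> \det N' != 0 ->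
  (forall U V, zeq N U V -> f U = f V) ->
  (forall U V, zeq N' U V -> g U = g V) ->
  (forall U, g (phi U) = f U) ->
  (forall U V, zeq N U V -> zeq N' (phi U) (phi V)) ->
  (forall U V, zeq N' (phi U) (phi V) -> zeq N U V) ->
  (forall V, exists U, zeq N' (phi U) V) ->
  \sum_(C in quotient_classes N)
     (match [pick b in C] with Some b => f (box_embed b) | None => 0 end)
  = \sum_(C in quotient_classes N')
     (match [pick b in C] with Some b => g (box_embed b) | None => 0 end).
Proof.
move=> hN hN' hf hg hgf hphi hphi' hsurj.
have hd' := boxd_gt0 hN'; have hd := boxd_gt0 hN.
pose rep (C : {set 'rV['I_(boxd N)]_n}) :=
  match [pick b in C] with Some b => box_embed b | None => 0 end.
pose h C := cls (box_rep hd' (phi (rep C))).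
have hrep b : zeq N (rep (cls b)) (box_embed b) by exact: rep_cls.
have hh b : h (cls b) = cls (box_rep hd' (phi (box_embed b))).
  apply/cls_eq => //; refine (zeq_trans (zeq_sym (zeq_box_rep _ _)) _).
  refine (zeq_trans _ (zeq_box_rep _ _)); exact: hphi.
have hinj : {in quotient_classes N &, injective h}.
  move=> C1 C2 /qc_cls [b1 ->] /qc_cls [b2 ->]; rewrite !hh => /cls_eq.
  move=> /(_ hN') e; apply/cls_eq => //; apply: hphi'.
  refine (zeq_trans (zeq_box_rep hd' _) _).
  by refine (zeq_trans e (zeq_sym (zeq_box_rep hd' _))).
have him : h @: quotient_classes N = quotient_classes N'.
  apply/setP => C'; apply/imsetP/idP.
    by case=> C /qc_cls [b ->] ->; rewrite hh; exact: cls_qc.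
  case/qc_cls => b' ->; have [U hU] := hsurj (box_embed b').
  exists (cls (box_rep hd U)); first exact: cls_qc.
  rewrite hh; apply/cls_eq => //; refine (zeq_sym _).
  refine (zeq_trans (zeq_sym (zeq_box_rep hd' _)) _); refine (zeq_trans _ hU).
  apply: hphi; refine (zeq_sym (zeq_box_rep hd _)).
rewrite -him [RHS]big_imset //=; apply: eq_bigr => C /qc_cls [b ->].
rewrite hh !pick_cls //; rewrite -hgf; apply: hg.
refine (zeq_box_rep hd' _).
Qed.
Lemma mxQtr n (A : 'M[int]_n) : \tr (mxQ A) = (\tr A)%:~R.
Proof. exact: trace_map_mx. Qed.

Lemma gauss_term_inv n (M N : 'M[int]_n) U V : \det N != 0 ->
  (M *m N^T)^T = M *m N^T -> zeq N U V -> gauss_term M N U = gauss_term M N V.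
Proof.
move=> hN hsym [W hW].
have uN := mxQ_unit hN.
have hU : mxQ U = mxQ V + mxQ W *m mxQ N.
  by rewrite -mxQM -mxQD -hW addrC subrK.
have hs : mxQ N *m (mxQ M)^T = mxQ M *m (mxQ N)^T.
  by rewrite trmx_mul trmxK in hsym; rewrite -!mxQT -!mxQM hsym.
rewrite /gauss_term.
set Ni := invmx (mxQ N).
pose T := V^T *m W *m M + W^T *m V *m M^T + N^T *m W^T *m W *m M.
suff -> : \tr ((mxQ U)^T *m mxQ U *m Ni *m mxQ M) =
   \tr ((mxQ V)^T *m mxQ V *m Ni *m mxQ M) + (\tr T)%:~R by rewrite e_addz.
have hUT : (mxQ U)^T = (mxQ V)^T + (mxQ N)^T *m (mxQ W)^T.
  by rewrite hU -trmx_mul; apply: raddfD.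
rewrite -mxQtr /T !mxQD !mxQM !mxQT hUT hU.
rewrite !mulmxDl !mulmxDr !mulmxDl !mxtraceD.
have t2 : (mxQ V)^T *m (mxQ W *m mxQ N) *m Ni *m mxQ M
    = (mxQ V)^T *m mxQ W *m mxQ M by rewrite mulmxA mulmxK.
have t4 : (mxQ N)^T *m (mxQ W)^T *m (mxQ W *m mxQ N) *m Ni *m mxQ M
    = (mxQ N)^T *m (mxQ W)^T *m mxQ W *m mxQ M by rewrite mulmxA mulmxK.
have t3 : \tr ((mxQ N)^T *m (mxQ W)^T *m mxQ V *m Ni *m mxQ M)
    = \tr ((mxQ W)^T *m mxQ V *m (mxQ M)^T).
  rewrite -!mulmxA mxtrace_mulC -!mulmxA -hs /Ni mulKmx //.
by rewrite t2 t3 t4 !addrA.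
Qed.
Definition dz n (f : nat -> int) : 'M[int]_n := diag_mx (\row_(i < n) f i).

Lemma dzM n f g : dz n f *m dz n g = dz n (fun i => f i * g i).
Proof.
rewrite /dz mul_diag_mx; apply/matrixP => i j; rewrite !mxE.
by rewrite mulrnAr.
Qed.

Lemma dz_scalar n f c : (forall i, (i < n)%N -> f i = c) -> dz n f = c%:M.
Proof. by move=> h; apply/matrixP => i j; rewrite !mxE h. Qed.

Lemma dzT n f : (dz n f)^T = dz n f.
Proof. by apply/matrixP => i j; rewrite !mxE eq_sym; case: eqP => // ->. Qed.

Lemma Xr_dz n q r : Xr n q r = mxQ (dz n (fun i => if (i < r)%N then q%:Z else 1)).
Proof.
apply/matrixP => i j; rewrite !mxE; case: eqP => [->|]; last by rewrite mulr0n.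
by rewrite mulr1n; case: ifP.
Qed.

Lemma X0r_dz n q r : (q > 0)%N ->
  q%:R *: X0r n q r = mxQ (dz n (fun i => if (n - r <= i)%N then 1 else q%:Z)).
Proof.
move=> q0; apply/matrixP => i j; rewrite !mxE; case: eqP => [->|]; last by rewrite mulr0n mulr0.
rewrite mulr1n; case: ifP => _; last by rewrite mulr1.
by rewrite divff // pnatr_eq0 -lt0n.
Qed.


Section Fq.
Variable q : nat.
Hypothesis hq : prime q.

Definition phq m n (A : 'M[int]_(m, n)) : 'M['F_q]_(m, n) :=
  map_mx (fun z : int => z%:~R : 'F_q) A.

Lemma phqM m n p (A : 'M[int]_(m, n)) (B : 'M[int]_(n, p)) :
  phq (A *m B) = phq A *m phq B.
Proof. exact: map_mxM. Qed.
Lemma phqD m n (A B : 'M[int]_(m, n)) : phq (A + B) = phq A + phq B.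
Proof. exact: map_mxD. Qed.
Lemma phqB m n (A B : 'M[int]_(m, n)) : phq (A - B) = phq A - phq B.
Proof. exact: map_mxB. Qed.
Lemma phq_qZ m n (A : 'M[int]_(m, n)) : phq (q%:Z *: A) = 0.
Proof.
rewrite /phq map_mxZ /=.
have -> : ((q%:Z)%:~R : 'F_q) = 0 by rewrite -pmulrn pchar_Fp_0.
by rewrite scale0r.
Qed.

Lemma fq0 (z : int) : (z%:~R : 'F_q) = 0 -> (q%:Z %| z)%Z.
Proof.
have h k : (k%:R : 'F_q) = 0 -> (q %| k)%N.
  move=> e; have := val_Fp_nat hq k; rewrite e /= => e2.
  by rewrite /dvdn -e2.
case: z => k.
  by move=> e; apply: h; rewrite -e -pmulrn.
rewrite NegzE mulrNz => /eqP; rewrite oppr_eq0 => /eqP e.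
by apply: h; rewrite -e -pmulrn.
Qed.

Lemma lift_Fq (x : 'F_q) : (((x : nat)%:Z)%:~R : 'F_q) = x.
Proof. by rewrite -pmulrn /= natr_Zp. Qed.

End Fq.

Unset Implicit Arguments.

Theorem proposition5p2 (n q r : nat) (M N M' N' : 'M[int]_n) :
  prime q -> (r <= n)%N ->
  coprime_symmetric_pair M N ->
  coprime_symmetric_pair M' N' ->
  mxQ M' = X0r n q r *m mxQ M *m invmx (Xr n q r) ->
  mxQ N' = X0r n q r *m mxQ N *m Xr n q r ->
  \det N != 0 ->
  gauss_sum M' N' = gauss_sum M N.
Proof.
move=> hq hrn [hsym hrank] [hsym' _] hM hN hdet.
have q0 : (0 < q)%N := prime_gt0 hq.
pose Xi := dz n (fun i => if (i < r)%N then q%:Z else 1).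
pose Xiq := dz n (fun i => if (i < r)%N then 1 else q%:Z).
pose X0q := dz n (fun i => if (n - r <= i)%N then 1 else q%:Z).
pose X0i := dz n (fun i => if (n - r <= i)%N then q%:Z else 1).
have XiXiq : Xi *m Xiq = q%:Z%:M.
  by rewrite dzM; apply: dz_scalar => i _; case: ifP; rewrite ?mulr1 ?mul1r.
have XiqXi : Xiq *m Xi = q%:Z%:M.
  by rewrite dzM; apply: dz_scalar => i _; case: ifP; rewrite ?mulr1 ?mul1r.
have X0qX0i : X0q *m X0i = q%:Z%:M.
  by rewrite dzM; apply: dz_scalar => i _; case: ifP; rewrite ?mulr1 ?mul1r.
have hXr : Xr n q r = mxQ Xi := Xr_dz n q r.
have hX0 : q%:R *: X0r n q r = mxQ X0q := X0r_dz n r q0.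
have qR0 : (q%:R : rat) != 0 by rewrite pnatr_eq0 -lt0n.
have qZ : ((q%:Z)%:~R : rat) = q%:R by rewrite -pmulrn.
have XrV : Xr n q r *m ((q%:R)^-1 *: mxQ Xiq) = 1%:M.
  rewrite hXr -scalemxAr -mxQM XiXiq /mxQ map_scalar_mx /= qZ.
  by rewrite scale_scalar_mx mulVf.
have uXr : Xr n q r \in unitmx := (mulmx1_unit XrV).1.
have eX0 : X0r n q r = (q%:R)^-1 *: mxQ X0q.
  by rewrite -hX0 scalerA mulVf // scale1r.
have X0rV : X0r n q r *m mxQ X0i = 1%:M.
  rewrite eX0 -scalemxAl -mxQM X0qX0i /mxQ map_scalar_mx /= qZ.
  by rewrite scale_scalar_mx mulVf.
have uX0 : X0r n q r \in unitmx := (mulmx1_unit X0rV).1.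
have hM' : mxQ M' *m Xr n q r = X0r n q r *m mxQ M by rewrite hM mulmxKV.
have XrXiq : Xr n q r *m mxQ Xiq = q%:R%:M.
  by rewrite hXr -mxQM XiXiq /mxQ map_scalar_mx /= qZ.
have I1 : X0q *m M = q%:Z *: (M' *m Xi).
  apply: mxQ_inj; rewrite mxQM mxQZ mxQM -hXr -hX0 -scalemxAl hM' qZ //.
have I2 : X0q *m N = N' *m Xiq.
  apply: mxQ_inj; rewrite !mxQM -hX0 hN -mulmxA XrXiq mul_mx_scalar.
  by rewrite scalemxAl.
have I3 : N *m Xi = X0i *m N'.
  apply: mxQ_inj; rewrite !mxQM -hXr hN !mulmxA (mulmx1C X0rV) mul1mx //.
have uN' : mxQ N' \in unitmx by rewrite hN !unitmx_mul uX0 mxQ_unit.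
have hdet' : \det N' != 0.
  by move: uN'; rewrite unitmxE /mxQ det_map_mx unitfE intr_eq0.
have uN := mxQ_unit hdet.
have XrT : (Xr n q r)^T = Xr n q r by rewrite hXr -mxQT dzT.
have [Z hZ] : exists Z, phq q (row_mx M N) *m Z = 1%:M.
  by apply/row_freeP; rewrite /row_free hrank.
rewrite /phq map_row_mx -[Z]vsubmxK mul_row_col -!/(phq q _) in hZ.
set Zu := usubmx Z in hZ; set Zd := dsubmx Z in hZ.
have qF : ((q%:Z)%:~R : 'F_q) = 0 by rewrite -pmulrn pchar_Fp_0.
symmetry; rewrite /gauss_sum.
apply: (gauss_sum_transfer (phi := fun U => U *m Xi)) => //.
- by move=> U V; apply: gauss_term_inv.
- by move=> U V; apply: gauss_term_inv.
- move=> U; rewrite /gauss_term.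
  set Xv := invmx (Xr n q r); set Ni := invmx (mxQ N).
  have e : mxQ N' *m (Xv *m Ni *m mxQ M *m Xv) = mxQ M'.
    rewrite hN hM !mulmxA mulmxK // mulmxK //.
  have hinv : invmx (mxQ N') *m mxQ M' = Xv *m Ni *m mxQ M *m Xv.
    by rewrite -e mulKmx.
  rewrite -mulmxA hinv mxQM -hXr trmx_mul XrT.
  have -> : Xr n q r *m (mxQ U)^T *m (mxQ U *m Xr n q r) *m
      (Xv *m Ni *m mxQ M *m Xv) =
      Xr n q r *m ((mxQ U)^T *m mxQ U *m Ni *m mxQ M *m Xv).
    by rewrite !mulmxA mulmxK.
  by rewrite mxtrace_mulC mulmxKV.
- move=> U V [W hW]; exists (W *m X0i).
  by rewrite -mulmxBl hW -[RHS]mulmxA -I3 mulmxA.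
- move=> U V [W hW].
  pose Z0 := W *m X0q.
  have e1 : Z0 *m M = q%:Z *: (W *m M' *m Xi).
    by rewrite /Z0 -mulmxA I1 -scalemxAr mulmxA.
  have e2 : Z0 *m N = q%:Z *: (U - V).
    rewrite /Z0 -mulmxA I2 mulmxA -hW mulmxBl -!mulmxA XiXiq !mul_mx_scalar.
    by rewrite scalerBr.
  clearbody Z0.
  have e3 : phq q Z0 = 0.
    rewrite -[phq q Z0]mulmx1 -hZ mulmxDr !mulmxA -!phqM e1 e2 !(phq_qZ hq).
    by rewrite !mul0mx addr0.
  have hdiv j : (q%:Z %| Z0 ord0 j)%Z.
    apply: (fq0 hq); move/matrixP: e3 => /(_ ord0 j); rewrite !mxE => h; exact: h.
  pose Y := \row_j ((Z0 ord0 j) %/ q%:Z)%Z.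
  have hZY : Z0 = q%:Z *: Y.
    by apply/matrixP => i k; rewrite ord1 !mxE mulrC divzK.
  exists Y; apply/matrixP => i j.
  move/matrixP: e2 => /(_ i j); rewrite hZY -scalemxAl !mxE.
  have qz : q%:Z != 0 by rewrite -lt0n.
  by move/(mulfI qz) ->.
move=> V.
pose Pm := phq q Xiq; pose Qm := phq q X0q.
have hP : Pm = pid_mx r.
  apply/matrixP => i j; rewrite !mxE.
  case: (eqVneq i j) => [->|neq]; first by rewrite !eqxx mulr1n; case: ifP.
  rewrite mulr0n.
  have -> : (i == j :> nat) = false by apply/negbTE.
  by [].
have hQ : Qm = copid_mx (n - r).
  apply/matrixP => i j; rewrite !mxE.
  case: (eqVneq i j) => [->|neq].
    rewrite !eqxx mulr1n /=; case: leqP => h; first by rewrite subr0.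
    by rewrite qF subrr.
  rewrite !mulr0n.
  have -> : (i == j :> nat) = false by apply/negbTE.
  by rewrite subrr.
have ha : Qm *m phq q M = 0 by rewrite -phqM I1 (phq_qZ hq).
have hb : phq q N' *m Pm = Qm *m phq q N by rewrite -!phqM I2.
set K := Qm *m phq q N.
have hQK : Qm = K *m Zd.
  by rewrite -[Qm]mulmx1 -hZ mulmxDr !mulmxA ha mul0mx add0r.
have hKP : K = K *m Pm by rewrite /K -hb -mulmxA hP pid_mx_id.
have rQ : \rank Qm = r by rewrite hQ rank_copid_mx ?leq_subr // subKn.
have rP : \rank Pm = r by rewrite hP rank_pid_mx.
have sKP : (K <= Pm)%MS by rewrite hKP submxMl.
have rK : (r <= \rank K)%N by rewrite -{1}rQ hQK mxrankM_maxl.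
have sPK : (Pm <= K)%MS.
  by rewrite -(mxrank_leqif_sup sKP).2 eqn_leq mxrankS //= rP rK.
have [D hD] := submxP sPK.
pose wb := phq q V *m D.
pose W := map_mx (fun x : 'F_q => (x : nat)%:Z) wb.
have hW : phq q W = wb by apply/matrixP => i j; rewrite /phq !mxE lift_Fq.
pose Y := V - W *m N'.
have hYdef : Y = V - W *m N' by [].
have hY : phq q (Y *m Xiq) = 0.
  rewrite hYdef phqM phqB phqM hW -/Pm mulmxBl -(mulmxA wb) hb -/K /wb.
  by rewrite -mulmxA -hD subrr.
clearbody Y.
have hdiv (j : 'I_n) : (j < r)%N -> (q%:Z %| Y ord0 j)%Z.
  move=> hj; apply: (fq0 hq); move/matrixP: hY => /(_ ord0 j).
  by rewrite /Xiq /dz mul_mx_diag /phq !mxE hj mulr1.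
pose U := \row_j (if (j < r)%N then (Y ord0 j %/ q%:Z)%Z else Y ord0 j).
have hUY : U *m Xi = Y.
  apply/matrixP => i j; rewrite ord1 /Xi /dz mul_mx_diag !mxE.
  by case: ifP => hj; [rewrite divzK // hdiv | rewrite mulr1].
exists U; rewrite hUY; exists (- W).
by rewrite hYdef mulNmx addrAC subrr add0r.
Qed.
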